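(* Let $\Phi$ (dimension $d$) and $\Psi$ (dimension $e$) be $\mathbf t$-modules over $K$, let $\delta\in\mathrm{Der}(\Phi,\Psi)$, and let $X$ be the $\mathbf t$-module with $X_a=\begin{bmatrix}\Phi_a&0\\ \delta(a)&\Psi_a\end{bmatrix}$, giving the short exact sequence $0\to\Psi\xrightarrow{i}X\xrightarrow{\pi}\Phi\to0$ with $i=\begin{bmatrix}0\\ I_e\end{bmatrix}$, $\pi=\begin{bmatrix}I_d&0\end{bmatrix}$. Then: (i) for every $\mathbf t$-module $\Xi$ of dimension $r$ and every morphism $g:\Xi\to\Phi$ of $\mathbf t$-modules, the pullback of this sequence along $g$ exists in the category of $\mathbf t$-modules and is the $\mathbf t$-module $Y$ with $Y_a=\begin{bmatrix}\Xi_a&0\\ \delta(a)g&\Psi_a\end{bmatrix}$ (i.e. the extension given by the biderivation $\delta\cdot g$), together with the morphisms $\begin{bmatrix}I_r&0\end{bmatrix}:Y\to\Xi$ and $\begin{bmatrix}g&0\\0&I_e\end{bmatrix}:Y\to X$; (ii) for every $\mathbf t$-module $\Xi$ of dimension $r$ and every morphism $f:\Psi\to\Xi$ of $\mathbf t$-modules, the pushout of this sequence along $f$ exists in the category of $\mathbf t$-modules and is the $\mathbf t$-module $Y$ with $Y_a=\begin{bmatrix}\Phi_a&0\\ f\delta(a)&\Xi_a\end{bmatrix}$ (the extension given by the biderivation $f\cdot\delta$), together with the morphisms $\begin{bmatrix}0\\ I_r\end{bmatrix}:\Xi\to Y$ and $\begin{bmatrix}I_d&0\\0&f\end{bmatrix}:X\to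 Y$.
   Context: $A=\mathbb F_q[t]$, $K$ a field of characteristic $p$ with $\mathbb F_q$-algebra map $\iota:A\to K$, $\theta=\iota(t)$; $K\{\tau\}$ twisted polynomials with $\tau x=x^q\tau$. A $\mathbf t$-module of dimension $d$: $\mathbb F_q$-algebra homomorphism $\Phi:\mathbb F_q[t]\to\mathrm{Mat}_d(K\{\tau\})$ with $\Phi_t=(\theta I+N)+\sum_{i\ge1}M_i\tau^i$, $N$ nilpotent. A morphism from $\Psi$ (dim $e$) to $\Phi$ (dim $d$) is $f\in\mathrm{Mat}_{d\times e}(K\{\tau\})$ with $f\Psi_t=\Phi_tf$; composition is matrix multiplication. $\mathrm{Der}(\Phi,\Psi)$ is the space of $\mathbb F_q$-linear $\delta:\mathbb F_q[t]\to\mathrm{Mat}_{e\times d}(K\{\tau\})$ with $\delta(ab)=\Psi_a\delta(b)+\delta(a)\Phi_b$. *)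

(* Defs.v *)
From HB Require Import structures.
From mathcomp Require Import all_boot all_order all_algebra.
Set Implicit Arguments. Unset Strict Implicit. Unset Printing Implicit Defensive.
Import GRing.Theory.
Local Open Scope ring_scope.

(* Setting: Fq a finite field with q := #|Fq| elements, K a field with an
   embedding iota0 : Fq -> K (so K is an Fq-algebra of characteristic p),
   A = {poly Fq} = Fq[t], and the Fq-algebra map iota : A -> K is the one
   extending iota0 with iota t = theta.

   Twisted polynomials K{tau}: an element sum_i a_i tau^i is represented by
   its coefficient sequence, i.e. by a {poly K} (the variable 'X playing
   the role of tau); only the *twisted* product [tmul] below is used for
   multiplication (tau x = x^q tau), addition is coefficientwise. *)

Section TModules.
Variables (Fq : finFieldType) (K : fieldType) (iota0 : {rmorphism Fq -> K})
          (theta : K).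

Local Notation q := #|Fq|.

Definition tmul (P Q : {poly K}) : {poly K} :=
  \sum_(i < size P) \sum_(j < size Q) ((P`_i * Q`_j ^+ (q ^ i)) *: 'X^(i + j)).

Definition tmulmx m n p (A : 'M[{poly K}]_(m, n)) (B : 'M[{poly K}]_(n, p))
  : 'M[{poly K}]_(m, p) :=
  \matrix_(i, j) \sum_(k < n) tmul (A i k) (B k j).

Definition fqscale m n (c : Fq) (A : 'M[{poly K}]_(m, n)) : 'M[{poly K}]_(m, n) :=
  map_mx (fun P => iota0 c *: P) A.

Definition is_tmodule d (Phi : {poly Fq} -> 'M[{poly K}]_d) : Prop :=
  [/\ forall (c : Fq) (a b : {poly Fq}), Phi (c *: a + b) = fqscale c (Phi a) + Phi b,
      Phi 1 = 1%:M,
      forall a b : {poly Fq}, Phi (a * b) = tmulmx (Phi a) (Phi b) &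
      exists N : 'M[K]_d, (exists k, N ^+ k = 0) /\
         map_mx (fun P : {poly K} => P`_0) (Phi 'X) = theta%:M + N].

(* f : Psi -> Phi (Psi of dim e, Phi of dim d) : f Psi_t = Phi_t f *)
Definition is_tmorph d e (Phi : {poly Fq} -> 'M[{poly K}]_d)
  (Psi : {poly Fq} -> 'M[{poly K}]_e) (f : 'M[{poly K}]_(d, e)) : Prop :=
  tmulmx f (Psi 'X) = tmulmx (Phi 'X) f.

Definition is_der d e (Phi : {poly Fq} -> 'M[{poly K}]_d)
  (Psi : {poly Fq} -> 'M[{poly K}]_e) (delta : {poly Fq} -> 'M[{poly K}]_(e, d))
  : Prop :=
  (forall (c : Fq) (a b : {poly Fq}), delta (c *: a + b) = fqscale c (delta a) + delta b)
  /\ (forall a b : {poly Fq},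
        delta (a * b) = tmulmx (Psi a) (delta b) + tmulmx (delta a) (Phi b)).

Definition is_pullback dA dB dC dP
  (FA : {poly Fq} -> 'M[{poly K}]_dA) (FB : {poly Fq} -> 'M[{poly K}]_dB)
  (FC : {poly Fq} -> 'M[{poly K}]_dC) (FP : {poly Fq} -> 'M[{poly K}]_dP)
  (g : 'M[{poly K}]_(dC, dA)) (h : 'M[{poly K}]_(dC, dB))
  (p1 : 'M[{poly K}]_(dA, dP)) (p2 : 'M[{poly K}]_(dB, dP)) : Prop :=
  [/\ is_tmodule FP, is_tmorph FA FP p1, is_tmorph FB FP p2,
      tmulmx g p1 = tmulmx h p2 &
      forall dW (FW : {poly Fq} -> 'M[{poly K}]_dW)
             (u : 'M[{poly K}]_(dA, dW)) (v : 'M[{poly K}]_(dB, dW)),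
        is_tmodule FW -> is_tmorph FA FW u -> is_tmorph FB FW v ->
        tmulmx g u = tmulmx h v ->
        exists! w : 'M[{poly K}]_(dP, dW),
          [/\ is_tmorph FP FW w, tmulmx p1 w = u & tmulmx p2 w = v]].

Definition is_pushout dA dB dC dP
  (FA : {poly Fq} -> 'M[{poly K}]_dA) (FB : {poly Fq} -> 'M[{poly K}]_dB)
  (FC : {poly Fq} -> 'M[{poly K}]_dC) (FP : {poly Fq} -> 'M[{poly K}]_dP)
  (g : 'M[{poly K}]_(dA, dC)) (h : 'M[{poly K}]_(dB, dC))
  (j1 : 'M[{poly K}]_(dP, dA)) (j2 : 'M[{poly K}]_(dP, dB)) : Prop :=
  [/\ is_tmodule FP, is_tmorph FP FA j1, is_tmorph FP FB j2,
      tmulmx j1 g = tmulmx j2 h &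
      forall dW (FW : {poly Fq} -> 'M[{poly K}]_dW)
             (u : 'M[{poly K}]_(dW, dA)) (v : 'M[{poly K}]_(dW, dB)),
        is_tmodule FW -> is_tmorph FW FA u -> is_tmorph FW FB v ->
        tmulmx u g = tmulmx v h ->
        exists! w : 'M[{poly K}]_(dW, dP),
          [/\ is_tmorph FW FP w, tmulmx w j1 = u & tmulmx w j2 = v]].

End TModules.

Arguments tmul Fq {K} P Q.
Arguments tmulmx Fq {K m n p} A B.
Arguments is_tmorph {Fq K d e} Phi Psi f.

(* Main.v *)
Require Import Defs.
From HB Require Import structures.
From mathcomp Require Import all_boot all_order all_algebra all_fingroup all_solvable all_field.
Set Implicit Arguments. Unset Strict Implicit. Unset Printing Implicit Defensive.
Import GRing.Theory.
Local Open Scope ring_scope.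

Section Frob.
Variables (Fq : finFieldType) (K : fieldType) (iota0 : {rmorphism Fq -> K}).
Local Notation q := #|Fq|.

Lemma q_pnat n : [pchar K].-nat (q ^ n)%N.
Proof.
have [p pr_p pc] := finPcharP Fq.
have pcK : p \in [pchar K] := rmorph_pchar iota0 pc.
rewrite (eq_pnat _ (pcharf_eq pcK)) pnatX.
have := abelem_pgroup (fin_ring_pchar_abelem pc).
by rewrite /pgroup cardsT => ->.
Qed.

Lemma frobD n (x y : K) : (x + y) ^+ (q ^ n)%N = x ^+ (q ^ n)%N + y ^+ (q ^ n)%N.
Proof. exact: exprDn_pchar (q_pnat n). Qed.

Lemma q_gt0 n : (0 < q ^ n)%N.
Proof. by rewrite expn_gt0 (ltn_trans _ (finNzRing_gt1 Fq)). Qed.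

Lemma frob0 n : (0 : K) ^+ (q ^ n)%N = 0.
Proof. by rewrite expr0n eqn0Ngt q_gt0. Qed.

Lemma frobFq n (c : Fq) : iota0 c ^+ (q ^ n)%N = iota0 c.
Proof.
elim: n => [|n IH]; first by rewrite expn0 expr1.
by rewrite expnS mulnC exprM IH -rmorphXn expf_card.
Qed.

Lemma sum_widen (V : nmodType) s n (F : nat -> V) : (s <= n)%N ->
  (forall i, (s <= i)%N -> F i = 0) -> \sum_(i < s) F i = \sum_(i < n) F i.
Proof.
move=> sn F0; rewrite (big_ord_widen n F sn) big_mkcond; apply: eq_bigr => i _.
by case: ifP => // /negbT; rewrite -leqNgt => /F0 ->.
Qed.

Local Notation tm := (tmul Fq).

Lemma tmulE n m (P Q : {poly K}) : (size P <= n)%N -> (size Q <= m)%N ->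
  tm P Q = \sum_(i < n) \sum_(j < m) ((P`_i * Q`_j ^+ (q ^ i)%N) *: 'X^(i + j)).
Proof.
move=> Pn Qm; rewrite /tmul (@sum_widen _ _ n (fun i => \sum_(j < size Q) ((P`_i * Q`_j ^+ (q ^ i)%N) *: 'X^(i + j)))) //.
  apply: eq_bigr => i _; apply: (@sum_widen _ _ m (fun j => ((P`_i * Q`_j ^+ (q ^ i)%N) *: 'X^(i + j)))) => // j Hj.
  by rewrite (nth_default _ Hj) frob0 mulr0 scale0r.
move=> i Hi; apply: big1 => j _; by rewrite nth_default // mul0r scale0r.
Qed.

Lemma tmulDl (P P' Q : {poly K}) : tm (P + P') Q = tm P Q + tm P' Q.
Proof.
set n := maxn (size P) (size P').
rewrite (@tmulE n (size Q)) ?size_polyD // (@tmulE n (size Q)) ?leq_maxl //.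
rewrite (@tmulE n (size Q)) ?leq_maxr // -big_split; apply: eq_bigr => i _.
rewrite -big_split; apply: eq_bigr => j _; by rewrite coefD mulrDl scalerDl.
Qed.

Lemma tmulDr (P Q Q' : {poly K}) : tm P (Q + Q') = tm P Q + tm P Q'.
Proof.
set m := maxn (size Q) (size Q').
rewrite (@tmulE (size P) m) ?size_polyD // (@tmulE (size P) m) ?leq_maxl //.
rewrite (@tmulE (size P) m) ?leq_maxr // -big_split; apply: eq_bigr => i _.
rewrite -big_split; apply: eq_bigr => j _; by rewrite coefD frobD mulrDr scalerDl.
Qed.

Lemma tmul0l (Q : {poly K}) : tm 0 Q = 0.
Proof. by rewrite /tmul size_poly0 big_ord0. Qed.

Lemma tmul0r (P : {poly K}) : tm P 0 = 0.
Proof. by rewrite /tmul; apply: big1 => i _; rewrite size_poly0 big_ord0. Qed.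

Lemma tmul_mono (a : K) i (b : K) j :
  tm (a *: 'X^i) (b *: 'X^j) = (a * b ^+ (q ^ i)%N) *: 'X^(i + j).
Proof.
rewrite (@tmulE i.+1 j.+1) ?(leq_trans (size_scale_leq _ _)) ?size_polyXn //.
rewrite big_ord_recr big1 /= => [|k _]; last first.
  apply: big1 => l _; rewrite coefZ coefXn /= (ltn_eqF (ltn_ord k)) mulr0 mul0r scale0r //.
rewrite add0r big_ord_recr big1 /= => [|l _]; last first.
  by rewrite coefZ (coefZ _ (GRing.exp _ j)) (coefXn _ j) (ltn_eqF (ltn_ord l)) mulr0 frob0 mulr0 scale0r.
by rewrite add0r !coefZ !coefXn !eqxx !mulr1.
Qed.

Lemma additive_ext (V : zmodType) (f g : {poly K} -> V) :
  (forall x y, f (x + y) = f x + f y) -> (forall x y, g (x + y) = g x + g y) ->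
  (forall a i, f (a *: 'X^i) = g (a *: 'X^i)) -> forall P, f P = g P.
Proof.
move=> fD gD fg P.
have f0 : f 0 = 0 by apply: (@addrI _ (f 0)); rewrite -fD !addr0.
have g0 : g 0 = 0 by apply: (@addrI _ (g 0)); rewrite -gD !addr0.
rewrite -[P]coefK poly_def (big_morph f fD f0) (big_morph g gD g0).
by apply: eq_bigr => i _.
Qed.

Lemma tmulA (P Q R : {poly K}) : tm (tm P Q) R = tm P (tm Q R).
Proof.
move: P; apply: additive_ext => [x y|x y|a i]; first by rewrite !tmulDl.
  by rewrite tmulDl.
move: Q; apply: additive_ext => [x y|x y|b j]; first by rewrite tmulDr tmulDl.
  by rewrite tmulDl tmulDr.
move: R; apply: additive_ext => [x y|x y|c k]; first by rewrite tmulDr.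
  by rewrite !tmulDr.
rewrite !tmul_mono addnA; congr (_ *: _).
by rewrite exprMn -exprM -expnD mulrA addnC.
Qed.

Lemma tmul1l (P : {poly K}) : tm 1 P = P.
Proof.
move: P; apply: additive_ext => [x y|x y|a i]; first by rewrite tmulDr.
  by [].
have -> : (1 : {poly K}) = 1 *: 'X^0 by rewrite expr0 scale1r.
by rewrite tmul_mono mul1r expn0 expr1 add0n.
Qed.

Lemma tmul1r (P : {poly K}) : tm P 1 = P.
Proof.
move: P; apply: additive_ext => [x y|x y|a i]; first by rewrite tmulDl.
  by [].
have -> : (1 : {poly K}) = 1 *: 'X^0 by rewrite expr0 scale1r.
by rewrite tmul_mono expr1n mulr1 addn0.
Qed.

Lemma tmulCl (k : K) (P : {poly K}) : tm k%:P P = k *: P.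
Proof.
move: P; apply: additive_ext => [x y|x y|a i]; first by rewrite tmulDr.
  by rewrite scalerDr.
have -> : k%:P = k *: 'X^0 by rewrite expr0 alg_polyC.
rewrite tmul_mono expn0 expr1 add0n scalerA.
by [].
Qed.

Lemma tmulFqr (c : Fq) (P : {poly K}) : tm P (iota0 c)%:P = iota0 c *: P.
Proof.
move: P; apply: additive_ext => [x y|x y|a i]; first by rewrite tmulDl.
  by rewrite scalerDr.
have -> : (iota0 c)%:P = iota0 c *: 'X^0 by rewrite expr0 alg_polyC.
rewrite tmul_mono addn0 frobFq scalerA mulrC.
by [].
Qed.

Lemma oneT : (1 : {poly K}) != 0.
Proof. exact: oner_neq0. Qed.
End Frob.
Definition tpoly (Fq : finFieldType) (K : fieldType) (iota0 : {rmorphism Fq -> K}) : Type := {poly K}.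
HB.instance Definition _ Fq K iota0 := GRing.Zmodule.on (@tpoly Fq K iota0).
Definition tpoly_ringmixin Fq K iota0 := @GRing.Zmodule_isNzRing.Build (@tpoly Fq K iota0)
  (1 : {poly K}) (tmul Fq)
  (fun x y z => esym (@tmulA Fq K iota0 x y z)) (@tmul1l Fq K iota0) (@tmul1r Fq K) (@tmulDl Fq K)
  (@tmulDr Fq K iota0) (@oneT K).
HB.instance Definition _ Fq K iota0 := @tpoly_ringmixin Fq K iota0.

Section Mx.
Variables (Fq : finFieldType) (K : fieldType) (iota0 : {rmorphism Fq -> K}).
Local Notation T := (@tpoly Fq K iota0).

Lemma tmulmxE m n p (A : 'M[{poly K}]_(m, n)) (B : 'M[{poly K}]_(n, p)) :
  tmulmx Fq A B = ((A : 'M[T]_(m, n)) *m (B : 'M[T]_(n, p))).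
Proof. by apply/matrixP => i j; rewrite !mxE. Qed.

End Mx.
Lemma oneE (Fq : finFieldType) (K : fieldType) (iota0 : {rmorphism Fq -> K}) n :
  (1%:M : 'M[{poly K}]_n) = (1%:M : 'M[@tpoly Fq K iota0]_n).
Proof. reflexivity. Qed.
Section Main.
Variables (Fq : finFieldType) (K : fieldType) (iota0 : {rmorphism Fq -> K}) (theta : K).
Local Notation T := (@tpoly Fq K iota0).
Local Notation q := #|Fq|.
Local Notation tE := (@tmulmxE Fq K iota0).
Definition sc (c : Fq) : T := (iota0 c)%:P.

Lemma mulTE (x y : T) : x * y = tmul Fq (x : {poly K}) (y : {poly K}).
Proof. by []. Qed.

Lemma fqscaleE m n c (A : 'M[T]_(m, n)) : fqscale iota0 c A = (sc c)%:M *m A.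
Proof.
apply/matrixP => i j; rewrite mul_scalar_mx !mxE mulTE /sc (@tmulCl _ _ iota0) //.
Qed.

Lemma scC m n c (A : 'M[T]_(m, n)) : A *m (sc c)%:M = (sc c)%:M *m A.
Proof.
apply/matrixP => i j; rewrite mul_scalar_mx !mxE (bigD1 j) //= big1 ?addr0 => [|k kj].
  by rewrite !mxE eqxx mulr1n !mulTE /sc (@tmulCl _ _ iota0) (@tmulFqr _ _ iota0).
by rewrite /scalar_mx mxE (negbTE kj) mulr0n mulr0.
Qed.

Lemma sc1 : sc 1 = 1.
Proof. by rewrite /sc rmorph1. Qed.

Definition Tmod d (F : {poly Fq} -> 'M[T]_d) :=
  [/\ forall c a b, F (c *: a + b) = (sc c)%:M *m F a + F b,
      F 1 = 1%:M & forall a b, F (a * b) = F a *m F b].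

Lemma tmodT d (F : {poly Fq} -> 'M[T]_d) : is_tmodule iota0 theta F -> Tmod F.
Proof.
case=> lin one mul _; split => [c a b|//|a b]; first by rewrite lin fqscaleE.
by rewrite mul tE.
Qed.

Lemma Tmod0 d (F : {poly Fq} -> 'M[T]_d) : Tmod F -> F 0 = 0.
Proof.
case=> lin _ _; move: (lin 1 0 0); rewrite scale1r addr0 sc1 mul1mx => h.
by apply: (@addrI _ (F 0)); rewrite addr0 -h.
Qed.

Lemma morph_all d e (Phi : {poly Fq} -> 'M[T]_d) (Psi : {poly Fq} -> 'M[T]_e)
  (g : 'M[T]_(d, e)) : Tmod Phi -> Tmod Psi -> g *m Psi 'X = Phi 'X *m g ->
  forall a, g *m Psi a = Phi a *m g.
Proof.
move=> hPhi hPsi gX; have [linPhi onePhi mulPhi] := hPhi; have [linPsi onePsi mulPsi] := hPsi.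
elim/poly_ind => [|p c IH].
  by rewrite (Tmod0 hPhi) (Tmod0 hPsi) mulmx0 mul0mx.
rewrite addrC -alg_polyC linPsi linPhi mulPsi mulPhi onePsi onePhi.
rewrite mulmxDr mulmxDl mulmx1 -mulmxA mulmxA scC IH -!mulmxA gX mul1mx //.
Qed.

End Main.
Section Main2.
Variables (Fq : finFieldType) (K : fieldType) (iota0 : {rmorphism Fq -> K}) (theta : K).
Local Notation T := (@tpoly Fq K iota0).
Local Notation tE := (@tmulmxE Fq K iota0).
Local Notation sc := (@sc Fq K iota0).

Definition Tder d e (Phi : {poly Fq} -> 'M[T]_d) (Psi : {poly Fq} -> 'M[T]_e)
  (delta : {poly Fq} -> 'M[T]_(e, d)) :=
  (forall c a b, delta (c *: a + b) = (sc c)%:M *m delta a + delta b) /\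
  (forall a b, delta (a * b) = Psi a *m delta b + delta a *m Phi b).

Lemma derT d e (Phi : {poly Fq} -> 'M[T]_d) (Psi : {poly Fq} -> 'M[T]_e)
  (delta : {poly Fq} -> 'M[T]_(e, d)) : is_der iota0 Phi Psi delta -> Tder Phi Psi delta.
Proof.
case=> lin mul; split => [c a b|a b]; first by rewrite lin fqscaleE.
by rewrite mul !tE.
Qed.

Lemma delta1 d e (Phi : {poly Fq} -> 'M[T]_d) (Psi : {poly Fq} -> 'M[T]_e)
  (delta : {poly Fq} -> 'M[T]_(e, d)) : Tmod Phi -> Tmod Psi ->
  Tder Phi Psi delta -> delta 1 = 0.
Proof.
case=> _ o1 _ [_ o2 _] [_ mul]; move: (mul 1 1); rewrite mulr1 o1 o2 mul1mx mulmx1 => h.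
by apply: (@addrI _ (delta 1)); rewrite addr0 -h.
Qed.

Lemma map0c m n : map_mx (fun P : {poly K} => P`_0) (0 : 'M[{poly K}]_(m, n)) = 0.
Proof. by apply/matrixP => i j; rewrite !mxE coef0. Qed.

Lemma blk_pow m n (A : 'M[K]_m) (B : 'M[K]_n) C k :
  exists C', (block_mx A 0 C B) ^+ k = block_mx (A ^+ k) 0 C' (B ^+ k).
Proof.
elim: k => [|k [C' IH]]; first by exists 0; rewrite !expr0 -scalar_mx_block.
exists (C *m A ^+ k + B *m C'); rewrite exprS IH -mulmxE mulmx_block.
by rewrite !mulmx0 !mul0mx !addr0 add0r !mulmxE -!exprS.
Qed.

Lemma blk_nil m n (A : 'M[K]_m) (B : 'M[K]_n) C : (exists k, A ^+ k = 0) ->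
  (exists k, B ^+ k = 0) -> exists k, (block_mx A 0 C B) ^+ k = 0.
Proof.
move=> [k1 h1] [k2 h2]; exists (k2 + k1)%N; rewrite exprD.
have [C1 ->] := blk_pow A B C k1; have [C2 ->] := blk_pow A B C k2.
rewrite h1 h2 -mulmxE mulmx_block.
by rewrite !mulmx0 !mul0mx !addr0 block_mx0.
Qed.

End Main2.

Unset Implicit Arguments. Set Strict Implicit. Set Printing Implicit Defensive.

Theorem theorem10p1 (Fq : finFieldType) (K : fieldType)
  (iota0 : {rmorphism Fq -> K}) (theta : K) (d e : nat)
  (Phi : {poly Fq} -> 'M[{poly K}]_d) (Psi : {poly Fq} -> 'M[{poly K}]_e)
  (delta : {poly Fq} -> 'M[{poly K}]_(e, d)) :
  is_tmodule iota0 theta Phi -> is_tmodule iota0 theta Psi ->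
  is_der iota0 Phi Psi delta ->
  let X := fun a : {poly Fq} => block_mx (Phi a) 0 (delta a) (Psi a) in
  let i := (col_mx 0 1%:M : 'M[{poly K}]_(d + e, e)) in
  let pi := (row_mx 1%:M 0 : 'M[{poly K}]_(d, d + e)) in
  (* (i) pullback along g : Xi -> Phi *)
  (forall (r : nat) (Xi : {poly Fq} -> 'M[{poly K}]_r) (g : 'M[{poly K}]_(d, r)),
     is_tmodule iota0 theta Xi -> is_tmorph Phi Xi g ->
     is_pullback iota0 theta Xi X Phi
       (fun a => block_mx (Xi a) 0 (tmulmx Fq (delta a) g) (Psi a))
       g pi
       (row_mx 1%:M 0 : 'M[{poly K}]_(r, r + e))
       (block_mx g 0 0 1%:M : 'M[{poly K}]_(d + e, r + e)))
  /\
  (* (ii) pushout along f : Psi -> Xi *)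
  (forall (r : nat) (Xi : {poly Fq} -> 'M[{poly K}]_r) (f : 'M[{poly K}]_(r, e)),
     is_tmodule iota0 theta Xi -> is_tmorph Xi Psi f ->
     is_pushout iota0 theta X Xi Psi
       (fun a => block_mx (Phi a) 0 (tmulmx Fq f (delta a)) (Xi a))
       i f
       (block_mx 1%:M 0 0 f : 'M[{poly K}]_(d + r, d + e))
       (col_mx 0 1%:M : 'M[{poly K}]_(d + r, r))).
Proof.
move=> hPhi hPsi hder; cbv zeta.
have TPhi := tmodT hPhi; have TPsi := tmodT hPsi.
have [dlin dmul] := derT hder.
have d1 := delta1 TPhi TPsi (derT hder).
have [linPhi onePhi mulPhi] := TPhi; have [linPsi onePsi mulPsi] := TPsi.
split.
- move=> r Xi g hXi gm.
  have TXi := tmodT hXi; have [linXi oneXi mulXi] := TXi.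
  have gall := morph_all TPhi TXi (etrans (esym (tmulmxE iota0 _ _)) (etrans gm (tmulmxE iota0 _ _))).
  split.
  + split.
    * move=> c a b /=; rewrite !(tmulmxE iota0) !fqscaleE dlin linXi linPsi (scalar_mx_block r e).
      rewrite !mulmx_block !mulmx0 !mul0mx !addr0 !add0r add_block_mx addr0 mulmxDl mulmxA //.
    * rewrite /= (tmulmxE iota0) d1 mul0mx oneXi onePsi; symmetry; apply: scalar_mx_block.
    * move=> a b /=; rewrite !(tmulmxE iota0) mulmx_block dmul mulXi mulPsi !mulmx0 !mul0mx !addr0 !add0r.
      by rewrite mulmxDl -!mulmxA -gall addrC.
    * move: hXi hPsi => [_ _ _ [N1 [[k1 n1] e1]]] [_ _ _ [N2 [[k2 n2] e2]]].
      exists (block_mx N1 0 (map_mx (fun P : {poly K} => P`_0) (tmulmx Fq (delta 'X) g)) N2).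
      split; first exact: blk_nil (ex_intro _ k1 n1) (ex_intro _ k2 n2).
      rewrite map_block_mx map0c e1 e2 (scalar_mx_block r e) add_block_mx addr0 add0r //.
  + rewrite /is_tmorph (oneE iota0 r) !(tmulmxE iota0) /= mul_row_block mul_mx_row !mul0mx !mul1mx !addr0 mulmx0 mulmx1 //.
  + rewrite /is_tmorph (oneE iota0 e) !(tmulmxE iota0) /= !mulmx_block !mul0mx !mul1mx !mulmx1 !mulmx0 !addr0 !add0r gall //.
  + rewrite (oneE iota0 r) (oneE iota0 d) !(tmulmxE iota0) mul_mx_row mul_row_block !mul0mx !mul1mx !mulmx1 !mulmx0 !addr0 //.
  + move=> dW FW u v _ hu hv.
    rewrite (oneE iota0 d) !(tmulmxE iota0) => huv.
    rewrite /is_tmorph !(tmulmxE iota0) /= in hu hv.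
    have vE : v = col_mx (usubmx v) (dsubmx v) by rewrite vsubmxK.
    move: huv hv; rewrite vE mul_row_col mul1mx mul0mx addr0 mul_col_mx mul_block_col.
    rewrite mul0mx addr0 => huv /eq_col_mx [hv1 hv2].
    exists (col_mx u (dsubmx v)); split.
      split.
      * rewrite /is_tmorph !(tmulmxE iota0) /= mul_col_mx mul_block_col mul0mx addr0 hu hv2 -huv.
        by rewrite mulmxA.
      * by rewrite (oneE iota0 r) (tmulmxE iota0) mul_row_col mul1mx mul0mx addr0.
      * by rewrite (oneE iota0 e) (tmulmxE iota0) mul_block_col mul1mx !mul0mx addr0 add0r huv.
    move=> w [_]; rewrite (oneE iota0 r) (oneE iota0 e) !(tmulmxE iota0).
    rewrite -[w]vsubmxK mul_row_col mul1mx mul0mx addr0 => <-.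
    rewrite mul_block_col mul1mx !mul0mx addr0 add0r => h.
    by case/eq_col_mx: h => _ ->.
- move=> r Xi f hXi fm.
  have TXi := tmodT hXi; have [linXi oneXi mulXi] := TXi.
  have fall := morph_all TXi TPsi (etrans (esym (tmulmxE iota0 _ _)) (etrans fm (tmulmxE iota0 _ _))).
  split.
  + split.
    * move=> c a b /=; rewrite !(tmulmxE iota0) !fqscaleE dlin linXi linPhi (scalar_mx_block d r).
      rewrite !mulmx_block !mulmx0 !mul0mx !addr0 !add0r add_block_mx addr0 mulmxDr mulmxA scC mulmxA //.
    * rewrite /= (tmulmxE iota0) d1 mulmx0 oneXi onePhi; symmetry; apply: scalar_mx_block.
    * move=> a b /=; rewrite !(tmulmxE iota0) mulmx_block dmul mulXi mulPhi !mulmx0 !mul0mx !addr0 !add0r.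
      by rewrite mulmxDr !mulmxA fall addrC.
    * move: hXi hPhi => [_ _ _ [N1 [[k1 n1] e1]]] [_ _ _ [N2 [[k2 n2] e2]]].
      exists (block_mx N2 0 (map_mx (fun P : {poly K} => P`_0) (tmulmx Fq f (delta 'X))) N1).
      split; first exact: blk_nil (ex_intro _ k2 n2) (ex_intro _ k1 n1).
      by rewrite map_block_mx map0c e1 e2 (scalar_mx_block d r) add_block_mx addr0 add0r //.
  + rewrite /is_tmorph (oneE iota0 d) !(tmulmxE iota0) /= !mulmx_block !mul0mx !mul1mx !mulmx1 !mulmx0 !addr0 !add0r fall //.
  + rewrite /is_tmorph (oneE iota0 r) !(tmulmxE iota0) /= mul_col_mx mul_block_col !mul0mx !mul1mx !mulmx1 !mulmx0 !addr0 !add0r //.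
  + rewrite (oneE iota0 d) (oneE iota0 e) (oneE iota0 r) !(tmulmxE iota0) mul_block_col mul_col_mx ?mul0mx ?mul1mx ?mulmx1 ?mulmx0 ?addr0 ?add0r //.
  + move=> dW FW u v _ hu hv.
    rewrite (oneE iota0 e) !(tmulmxE iota0) => huv.
    rewrite /is_tmorph !(tmulmxE iota0) /= in hu hv.
    have uE : u = row_mx (lsubmx u) (rsubmx u) by rewrite hsubmxK.
    move: huv hu; rewrite uE mul_row_col mulmx1 mulmx0 add0r mul_mx_row mul_row_block.
    rewrite mulmx0 add0r => huv /eq_row_mx [hu1 hu2].
    exists (row_mx (lsubmx u) v); split.
      split.
      * rewrite /is_tmorph !(tmulmxE iota0) /= mul_mx_row mul_row_block mulmx0 add0r hv -hu1 huv.
        by rewrite mulmxA.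
      * by rewrite (oneE iota0 d) (tmulmxE iota0) mul_row_block mulmx1 !mulmx0 addr0 add0r huv.
      * by rewrite (oneE iota0 r) (tmulmxE iota0) mul_row_col mulmx1 mulmx0 add0r.
    move=> w [_]; rewrite (oneE iota0 d) (oneE iota0 r) !(tmulmxE iota0).
    rewrite -[w]hsubmxK mul_row_block mulmx1 !mulmx0 addr0 add0r => h.
    rewrite mul_row_col mulmx1 mulmx0 add0r => <-.
    by case/eq_row_mx: h => -> _.
Qed.
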